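(* For a digraph $X$ the following are equivalent: (a) every eigenvalue of $H(X)$ lies in $(-\sqrt{2},\sqrt{2})$; (b) every eigenvalue of $H(X)$ lies in $[-1,1]$; (c) every weakly connected component of $X$ is a single arc, a digon, or an isolated vertex.
   Context: A digraph $X$ has a finite vertex set and an arc set of ordered pairs of distinct vertices; $\{x,y\}$ is a digon if both $xy,yx$ are arcs. The underlying graph $\Gamma(X)$ is the simple graph with an edge $\{x,y\}$ whenever $xy$ or $yx$ is an arc; weakly connected components of $X$ are the sub-digraphs induced on components of $\Gamma(X)$. The Hermitian adjacency matrix $H(X)$ has $(u,v)$-entry $1$ if $uv$ and $vu$ are arcs, $i$ if only $uv$ is an arc, $-i$ if only $vu$ is an arc, and $0$ otherwise. *)

(* Defs.v *)
From HB Require Import structures.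
From mathcomp Require Import all_boot all_order all_algebra all_field.
Set Implicit Arguments. Unset Strict Implicit. Unset Printing Implicit Defensive.
Import Order.TTheory GRing.Theory Num.Theory.
Local Open Scope ring_scope.

Definition digraph n (arc : rel 'I_n) : Prop := irreflexive arc.

Definition hermAdj n (arc : rel 'I_n) : 'M[algC]_n :=
  \matrix_(u, v)
    (if arc u v && arc v u then 1
     else if arc u v then 'i
     else if arc v u then - 'i
     else 0).

Definition undl n (arc : rel 'I_n) : rel 'I_n := fun x y => arc x y || arc y x.

Definition wcomp n (arc : rel 'I_n) (x : 'I_n) : {set 'I_n} :=
  [set y | connect (undl arc) x y].

Definition isolated_vertex n (C : {set 'I_n}) : Prop := exists u, C = [set u].
Definition single_arc n (arc : rel 'I_n) (C : {set 'I_n}) : Prop :=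
  exists u v, [/\ u != v, C = [set u; v], arc u v & ~~ arc v u].
Definition digon n (arc : rel 'I_n) (C : {set 'I_n}) : Prop :=
  exists u v, [/\ u != v, C = [set u; v], arc u v & arc v u].

(* Main.v *)
From HB Require Import structures.
Require Import Defs.
From mathcomp Require Import all_boot all_order all_algebra all_field.
From mathcomp Require Import ring.
Import Order.TTheory GRing.Theory Num.Theory.
Local Open Scope ring_scope.
Set Implicit Arguments. Unset Strict Implicit. Unset Printing Implicit Defensive.
Local Open Scope sesquilinear_scope.
Lemma spec_bound n (M : 'M[algC]_n) (y : 'I_n) :
  M ^t* = M ->
  (forall a, eigenvalue M a -> (- sqrtC 2%:R < a) && (a < sqrtC 2%:R)) ->
  (M *m M) y y < 2%:R.
Proof.
move=> Mh Heig.
have Mn : M \is normalmx by apply/normalmxP; rewrite Mh.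
set P := spectralmx M; set d := spectral_diag M.
have hM : M = invmx P *m diag_mx d *m P by apply/orthomx_spectralP.
have PU : P \is unitarymx := spectral_unitarymx M.
have Punit : P \in unitmx := spectral_unit M.
have Pinv : invmx P = P^t* by apply: invmx_unitary.
have PPt : P *m P^t* = 1%:M by apply/unitarymxP.
have PtP : P^t* *m P = 1%:M by rewrite -Pinv mulVmx.
have eig i : eigenvalue M (d 0 i).
  apply/eigenvalueP; exists (row i P).
    rewrite -row_mul {1}hM !mulmxA mulmxV // mul1mx.
    by apply/rowP => j; rewrite !mxE (bigD1 i) //= big1 ?addr0 => [|k /negbTE ki];
      rewrite !mxE ?eqxx ?mulr1n // eq_sym ki mulr0n mul0r.
  apply/eqP => Hr.
  have := congr1 (fun X => (X *m P^t*) 0 i) Hr.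
  by rewrite -row_mul PPt mul0mx !mxE eqxx /= => /eqP; rewrite oner_eq0.
have d2 i : d 0 i * d 0 i < 2%:R.
  have /andP[h1 h2] := Heig _ (eig i).
  rewrite -subr_gt0.
  have -> : 2%:R - d 0 i * d 0 i = (sqrtC 2%:R - d 0 i) * (d 0 i - - sqrtC 2%:R).
    by rewrite -{1}(sqrtCK 2%:R); ring.
  by apply: mulr_gt0; rewrite subr_gt0.
have MM : M *m M = P^t* *m (diag_mx d *m diag_mx d) *m P.
  rewrite hM Pinv !mulmxA; congr (_ *m _).
  by rewrite -[_ *m P *m P^t*]mulmxA PPt mulmx1.

have sumw : \sum_i P^t* y i * P i y = 1.
  transitivity ((P^t* *m P) y y); first by rewrite [RHS]mxE.
  by rewrite PtP mxE eqxx.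
have wE i : P^t* y i * P i y = (P i y)^* * P i y by rewrite !mxE.
have MMy : (M *m M) y y = \sum_i P^t* y i * P i y * (d 0 i * d 0 i).
  rewrite MM mxE; apply: eq_bigr => i _.
  rewrite mulmxA !mul_mx_diag mxE [in LHS]mxE; ring.
rewrite MMy -subr_gt0.
have -> : 2%:R - \sum_i P^t* y i * P i y * (d 0 i * d 0 i)
   = \sum_i P^t* y i * P i y * (2%:R - d 0 i * d 0 i).
  rewrite -[X in X - _]mulr1 -sumw mulr_sumr -sumrB; apply: eq_bigr => i _; ring.
have [i Pi] : exists i, P i y != 0.
  apply/existsP; apply: contraT; rewrite negb_exists => /forallP H.
  move/eqP: sumw; rewrite big1 ?(eq_sym 0) ?oner_eq0 // => i _.
  by have := H i; rewrite negbK => /eqP ->; rewrite mulr0.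
rewrite (bigD1 i) //= ltr_wpDr //.
  apply: sumr_ge0 => j _; apply: mulr_ge0; last by rewrite subr_ge0 ltW.
  by rewrite wE mulrC mul_conjC_ge0.
apply: mulr_gt0; last by rewrite subr_gt0.
by rewrite wE mulrC mul_conjC_gt0.
Qed.

Definition Pdeg n (arc : rel 'I_n) := forall y x z : 'I_n, undl arc y x -> undl arc y z -> x = z.

Section S.
Variables (n : nat) (arc : rel 'I_n) (Hdig : digraph arc).
Local Notation A := (hermAdj arc).
Lemma hA0 u v : ~~ undl arc u v -> A u v = 0.
Proof. by rewrite /undl mxE negb_or => /andP[/negbTE-> /negbTE->]; rewrite andbF. Qed.

Lemma hAprod u v : A u v * A v u = (undl arc u v)%:R.
Proof.
rewrite !mxE /undl; case: (arc u v); case: (arc v u) => //=; rewrite ?mulr1 ?mul0r //.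
  by rewrite mulrN mulCii opprK.
by rewrite mulNr mulCii opprK.
Qed.

Lemma hAconj u v : (A v u)^* = A u v.
Proof.
rewrite !mxE; case: (arc u v); case: (arc v u) => //=.
 - rewrite rmorph1 //.
 - by rewrite rmorphN /= conjCi opprK.
 - rewrite conjCi //.
 - rewrite rmorph0 //.
Qed.

Lemma hA_adj : A ^t* = A.
Proof. by apply/matrixP => u v; have := hAconj u v; rewrite !mxE. Qed.

Lemma undlC u v : undl arc u v = undl arc v u.
Proof. by rewrite /undl orbC. Qed.

Lemma undl_neq u v : undl arc u v -> u != v.
Proof. by apply: contraTneq => ->; rewrite /undl Hdig. Qed.

Lemma set2_aux (u v x y z : 'I_n) : x \in [set u; v] -> y \in [set u; v] ->
  z \in [set u; v] -> x != y -> z != y -> x = z.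
Proof.
by rewrite !inE => /orP[]/eqP-> /orP[]/eqP-> /orP[]/eqP->; rewrite ?eqxx.
Qed.

Lemma Pdeg_c : Pdeg arc -> forall x, isolated_vertex (wcomp arc x) \/
              single_arc arc (wcomp arc x) \/ digon arc (wcomp arc x).
Proof.
move=> HP x.
case: (pickP (undl arc x)) => [w xw | nox].
- have xw' := undl_neq xw.
  have Hc : wcomp arc x = [set x; w].
    apply/setP => y; rewrite inE; apply/idP/idP.
      move=> cxy.
      have cl : closed (undl arc) (mem [set x; w]).
        move=> u v uv; rewrite !inE.
        apply/idP/idP => /orP[]/eqP E; rewrite E in uv *.
        + by rewrite (HP _ _ _ uv xw) eqxx orbT.
        + by rewrite (HP w v x uv) ?eqxx // undlC.
        + by rewrite (HP x u w) ?eqxx ?orbT // undlC.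
        + by rewrite (HP w u x) ?eqxx // undlC.
      by rewrite -(closed_connect cl cxy) !inE eqxx.
    by case/set2P => ->; [exact: connect0 | exact: connect1].
  rewrite Hc; case Exw: (arc x w); case Ewx: (arc w x).
  + by right; right; exists x, w.
  + by right; left; exists x, w; rewrite Ewx.
  + right; left; exists w, x; split => //; last by rewrite Exw.
      by rewrite eq_sym.
    by rewrite setUC.
  + by move: xw; rewrite /undl Exw Ewx.
- left; exists x; apply/setP => y; rewrite /wcomp !inE; apply/idP/idP.
    move=> cxy.
    have cl : closed (undl arc) (mem [set x]).
      move=> u v uv; rewrite !inE.
      apply/idP/idP => /eqP E; rewrite E in uv *.
      + by move: (nox v); rewrite uv.
      + by move: (nox u); rewrite undlC uv.
    by have := closed_connect cl cxy; rewrite !inE eqxx => <-.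
  by move=> /eqP ->; exact: connect0.
Qed.

Lemma c_Pdeg : (forall x, isolated_vertex (wcomp arc x) \/
              single_arc arc (wcomp arc x) \/ digon arc (wcomp arc x)) -> Pdeg arc.
Proof.
move=> Hc y x z yx yz.
have xin : x \in wcomp arc y by rewrite inE connect1.
have zin : z \in wcomp arc y by rewrite inE connect1.
have yin : y \in wcomp arc y by rewrite inE connect0.
have nyx : x != y by rewrite eq_sym; apply: undl_neq.
have nyz : z != y by rewrite eq_sym; apply: undl_neq.
case: (Hc y) => [[u Hu] | [[u [v [_ Hu _ _]]] | [u [v [_ Hu _ _]]]]];
  rewrite Hu in xin zin yin.
- by move: nyx; rewrite !inE in xin yin; rewrite (eqP xin) (eqP yin) eqxx.
- exact: set2_aux xin yin zin nyx nyz.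
- exact: set2_aux xin yin zin nyx nyz.
Qed.

Lemma A2_entry (HP : Pdeg arc) u v :
  (A *m A) u v = ((u == v) && [exists w, undl arc u w])%:R.
Proof.
rewrite mxE; case: (pickP (undl arc u)) => [w0 uw0 | none].
  rewrite (bigD1 w0) //= big1 => [|w ww0]; last first.
    rewrite hA0 ?mul0r //; apply/negP => uw; move/eqP: ww0; apply.
    exact: HP uw uw0.
  have -> : [exists w, undl arc u w] by apply/existsP; exists w0.
  rewrite andbT addr0; case: eqVneq => [<- | uv]; first by rewrite hAprod uw0.
  rewrite (hA0 (u := w0)) ?mulr0 //; apply/negP => w0v; move/eqP: uv; apply.
  by apply: (HP w0) => //; rewrite undlC.
have -> : [exists w, undl arc u w] = false.
  by apply/negbTE/negP => /existsP [w]; rewrite none.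
by rewrite andbF big1 // => w _; rewrite hA0 ?mul0r // none.
Qed.

Lemma A3 (HP : Pdeg arc) : A *m A *m A = A.
Proof.
apply/matrixP => u v; rewrite mxE (bigD1 u) //= big1 => [|w wu]; last first.
  by rewrite (A2_entry HP) eq_sym (negbTE wu) /= mul0r.
rewrite (A2_entry HP) eqxx /= addr0; case: (boolP (undl arc u v)) => uv.
  have -> : [exists w, undl arc u w] by apply/existsP; exists v.
  by rewrite mul1r.
by rewrite hA0 // mulr0.
Qed.

Lemma P_b (HP : Pdeg arc) a : eigenvalue A a -> (-1 <= a) && (a <= 1).
Proof.
move=> /eigenvalueP [v hv vn0].
have h3 : v *m (A *m A *m A) = (a * a * a) *: v.
  by rewrite !mulmxA hv -scalemxAl hv scalerA -scalemxAl hv scalerA.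
move: h3; rewrite A3 // hv => /eqP; rewrite -subr_eq0 -scalerBl scaler_eq0 (negbTE vn0) orbF.
have -> : a - a * a * a = a * (1 - a) * (1 + a) by ring.
rewrite !mulf_eq0 => /orP[/orP[]|].
- by move/eqP->; rewrite lerN10 ler01.
- by rewrite subr_eq0 => /eqP <-; rewrite lexx andbT (le_trans (lerN10 _) ler01).
- by rewrite addrC addr_eq0 => /eqP ->; rewrite lexx /= (le_trans (lerN10 _) ler01).
Qed.

Lemma b_a (a : algC) : (-1 <= a) && (a <= 1) -> (- sqrtC 2%:R < a) && (a < sqrtC 2%:R).
Proof.
have s : 1 < sqrtC 2%:R :> algC.
  by rewrite -{1}sqrtC1 ltr_sqrtC ?nnegrE ?ler01 ?ler0n // ltr1n.
move=> /andP[h1 h2]; apply/andP; split.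
  by apply: lt_le_trans h1; rewrite ltrN2.
exact: le_lt_trans h2 s.
Qed.

Lemma a_P : (forall a, eigenvalue A a -> (- sqrtC 2%:R < a) && (a < sqrtC 2%:R)) -> Pdeg arc.
Proof.
move=> Ha y x z yx yz; apply/eqP; apply: contraT => xz.
have ge2 : 2%:R <= (A *m A) y y.
  rewrite mxE (bigD1 x) //= (bigD1 z) /=; last by rewrite eq_sym xz.
  rewrite !hAprod yx yz addrA -natrD lerDl.
  by apply: sumr_ge0 => k _; rewrite hAprod ler0n.
by have := spec_bound y (hA_adj) Ha; rewrite (le_gtF ge2).
Qed.

End S.

Theorem theorem9p2 (n : nat) (arc : rel 'I_n) (Hdig : digraph arc) :
  [/\ ((forall a : algC, eigenvalue (hermAdj arc) a ->
          (- sqrtC 2%:R < a) && (a < sqrtC 2%:R))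
       <-> (forall a : algC, eigenvalue (hermAdj arc) a -> (-1 <= a) && (a <= 1))),
      ((forall a : algC, eigenvalue (hermAdj arc) a -> (-1 <= a) && (a <= 1))
       <-> (forall x : 'I_n, isolated_vertex (wcomp arc x) \/
              single_arc arc (wcomp arc x) \/ digon arc (wcomp arc x)))
    & ((forall x : 'I_n, isolated_vertex (wcomp arc x) \/
              single_arc arc (wcomp arc x) \/ digon arc (wcomp arc x))
       <-> (forall a : algC, eigenvalue (hermAdj arc) a ->
          (- sqrtC 2%:R < a) && (a < sqrtC 2%:R)))].
Proof.
have ba : (forall a : algC, eigenvalue (hermAdj arc) a -> (-1 <= a) && (a <= 1)) ->
  (forall a : algC, eigenvalue (hermAdj arc) a -> (- sqrtC 2%:R < a) && (a < sqrtC 2%:R)).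
  by move=> H a /H; apply: b_a.
split; split.
- by move=> /a_P HP; apply: P_b.
- exact: ba.
- by move=> /ba /a_P; apply: (Pdeg_c Hdig).
- by move=> /(c_Pdeg Hdig) HP; apply: P_b.
- by move=> /(c_Pdeg Hdig) HP; apply: ba; apply: P_b.
- by move=> /a_P; apply: (Pdeg_c Hdig).
Qed.
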